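(* Let $f:\mathbb{R}^n\times\mathbb{R}^m\to\mathbb{R}$ be twice continuously differentiable, $\mu$-strongly convex in $x$ and $\mu$-strongly concave in $y$ ($\mu>0$), with the largest singular value of $\nabla F(z)$ at most $L$ for all $z$ and $\|\nabla F(z)-\nabla F(z')\|\le L_2\|z-z'\|$, where $z=(x;y)$ and $F(z)=(\nabla_x f(x,y);-\nabla_y f(x,y))$. Let $m(z)=\frac12\|F(z)\|^2$, and for a starting point $z^0$ let $D=\max\{\|z-z^0\|: m(z)\le m(z^0)\}$ and $L_m=L^2+L_2LD$. Let $\{z^k\}$ be generated by the CRN-SPP method (described in the context) with constant stepsize $\alpha=\frac{\mu^2}{2L_m}<1$. Then for every $k$, $$m(z^{k+1})-m(z^k)\le-\frac{\mu^4}{8L_m}\|d^k\|^2.$$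
   Context: CRN-SPP with parameters $\bar\gamma>0$, $\rho,\alpha\in(0,1)$: at iterate $z^k=(x^k;y^k)$ let $g^k=\nabla f(z^k)$, $H^k=\nabla^2 f(z^k)$ and for $\gamma>0$ define $f_k(x,y;\gamma)=f(z^k)+\langle g^k,z-z^k\rangle+\frac12(z-z^k)^\top H^k(z-z^k)+\frac{\gamma}{3}\|x-x^k\|^3-\frac{\gamma}{3}\|y-y^k\|^3$. Set $\gamma^k=\bar\gamma$, compute the saddle point $(\tilde x,\tilde y)$ of $\min_x\max_y f_k(x,y;\gamma^k)$, and let $u^k=\tilde x-x^k$, $v^k=\tilde y-y^k$; while $\gamma^k(\|u^k\|+\|v^k\|)>\mu$, replace $\gamma^k$ by $\rho\gamma^k$ and recompute. Set $d^k=(u^k;v^k)$, and $z^{k+1}=z^k+\alpha d^k$ if $m(z^k+\alpha d^k)<m(z^k+d^k)$, otherwise $z^{k+1}=z^k+d^k$. Norms: Euclidean for vectors, largest singular value for matrices. *)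

(* Defs.v *)
From HB Require Import structures.
From mathcomp Require Import all_boot all_order all_algebra.
From mathcomp Require Import all_classical all_reals all_analysis.
Set Implicit Arguments. Unset Strict Implicit. Unset Printing Implicit Defensive.
Import Order.TTheory GRing.Theory Num.Theory.
Import numFieldNormedType.Exports.
Local Open Scope ring_scope.

Section Defs.
Variable R : realType.

Definition dotv (p : nat) (u v : 'cV[R]_p) : R := \sum_(i < p) u i 0 * v i 0.
Definition normE (p : nat) (v : 'cV[R]_p) : R := Num.sqrt (dotv v v).

(* ||A v|| <= c ||v|| for all v, i.e. the largest singular value
   (spectral / induced 2-norm) of A is at most c. *)
Definition specnorm_le (p q : nat) (A : 'M[R]_(p, q)) (c : R) : Prop :=
  forall v : 'cV[R]_q, normE (A *m v) <= c * normE v.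

Variables n m : nat.
Notation V := 'cV[R]_(n + m).

Definition has_gradient (f : V -> R) (g : V -> V) : Prop :=
  forall z, differentiable f z /\ forall h, 'd f z h = dotv (g z) h.

Definition has_jacobian (g : V -> V) (H : V -> 'M[R]_(n + m)) : Prop :=
  forall z, differentiable g z /\ forall h, 'd g z h = H z *m h.

Definition strongly_convex_x (mu : R) (f : V -> R) : Prop :=
  forall (y : 'cV[R]_m) (x1 x2 : 'cV[R]_n) (t : R), 0 <= t <= 1 ->
    f (col_mx (t *: x1 + (1 - t) *: x2) y)
      <= t * f (col_mx x1 y) + (1 - t) * f (col_mx x2 y)
         - mu / 2 * t * (1 - t) * normE (x1 - x2) ^+ 2.

Definition strongly_concave_y (mu : R) (f : V -> R) : Prop :=
  forall (x : 'cV[R]_n) (y1 y2 : 'cV[R]_m) (t : R), 0 <= t <= 1 ->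
    f (col_mx x (t *: y1 + (1 - t) *: y2))
      >= t * f (col_mx x y1) + (1 - t) * f (col_mx x y2)
         + mu / 2 * t * (1 - t) * normE (y1 - y2) ^+ 2.

Definition Fop (g : V -> V) (z : V) : V :=
  col_mx (usubmx (g z)) (- dsubmx (g z)).
Definition JF (H : V -> 'M[R]_(n + m)) (z : V) : 'M[R]_(n + m) :=
  col_mx (usubmx (H z)) (- dsubmx (H z)).

Definition merit (g : V -> V) (z : V) : R := 2^-1 * normE (Fop g z) ^+ 2.

Definition is_level_max (g : V -> V) (z0 : V) (D : R) : Prop :=
  (exists z, merit g z <= merit g z0 /\ normE (z - z0) = D) /\
  (forall z, merit g z <= merit g z0 -> normE (z - z0) <= D).

Definition crn_model (f : V -> R) (g : V -> V) (H : V -> 'M[R]_(n + m))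
    (zk : V) (gam : R) (w : V) : R :=
  f zk + dotv (g zk) (w - zk) + 2^-1 * dotv (w - zk) (H zk *m (w - zk))
  + gam / 3 * normE (usubmx (w - zk)) ^+ 3
  - gam / 3 * normE (dsubmx (w - zk)) ^+ 3.

Definition is_saddle (phi : 'cV[R]_n -> 'cV[R]_m -> R)
    (xs : 'cV[R]_n) (ys : 'cV[R]_m) : Prop :=
  forall x y, phi xs y <= phi xs ys /\ phi xs ys <= phi x ys.

Definition crn_dir (f : V -> R) (g : V -> V) (H : V -> 'M[R]_(n + m))
    (zk : V) (gam : R) (d : V) : Prop :=
  is_saddle (fun x y => crn_model f g H zk gam (col_mx x y))
    (usubmx (zk + d)) (dsubmx (zk + d)).

(* One iteration of CRN-SPP: gamma^k = gbar * rho^j with j the first index for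
   which gamma (||u|| + ||v||) <= mu, then the (alpha vs 1) step choice. *)
Definition crn_step (f : V -> R) (g : V -> V) (H : V -> 'M[R]_(n + m))
    (mu gbar rho alpha : R) (zk zk1 dk : V) : Prop :=
  exists j : nat,
    crn_dir f g H zk (gbar * rho ^+ j) dk /\
    gbar * rho ^+ j * (normE (usubmx dk) + normE (dsubmx dk)) <= mu /\
    (forall i : nat, (i < j)%N -> forall d' : V,
        crn_dir f g H zk (gbar * rho ^+ i) d' ->
        mu < gbar * rho ^+ i * (normE (usubmx d') + normE (dsubmx d'))) /\
    zk1 = (if merit g (zk + alpha *: dk) < merit g (zk + dk)
           then zk + alpha *: dk else zk + dk).

End Defs.

(* Main.v *)
Require Import Defs.
From HB Require Import structures.
From mathcomp Require Import all_boot all_order all_algebra.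
From mathcomp Require Import all_classical all_reals all_analysis.
Import Order.TTheory GRing.Theory Num.Theory.
Import numFieldNormedType.Exports.
Local Open Scope ring_scope.

From mathcomp Require Import ring lra.
Set Implicit Arguments. Unset Strict Implicit. Unset Printing Implicit Defensive.


Section VecAlg.
Variable R : realType.
Implicit Types (p : nat).

Lemma dotvC p (u v : 'cV[R]_p) : dotv u v = dotv v u.
Proof. by apply: eq_bigr => i _; rewrite mulrC. Qed.

Lemma dotvDl p (u w v : 'cV[R]_p) : dotv (u + w) v = dotv u v + dotv w v.
Proof. by rewrite /dotv -big_split; apply: eq_bigr => i _; rewrite mxE mulrDl. Qed.

Lemma dotvZl p a (u v : 'cV[R]_p) : dotv (a *: u) v = a * dotv u v.
Proof. by rewrite /dotv mulr_sumr; apply: eq_bigr => i _; rewrite mxE mulrA. Qed.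

Lemma dotvNl p (u v : 'cV[R]_p) : dotv (- u) v = - dotv u v.
Proof. by rewrite -scaleN1r dotvZl mulN1r. Qed.

Lemma dotvBl p (u w v : 'cV[R]_p) : dotv (u - w) v = dotv u v - dotv w v.
Proof. by rewrite dotvDl dotvNl. Qed.

Lemma dotvDr p (u w v : 'cV[R]_p) : dotv v (u + w) = dotv v u + dotv v w.
Proof. by rewrite dotvC dotvDl !(dotvC v). Qed.

Lemma dotvZr p a (u v : 'cV[R]_p) : dotv v (a *: u) = a * dotv v u.
Proof. by rewrite dotvC dotvZl dotvC. Qed.

Lemma dotvNr p (u v : 'cV[R]_p) : dotv v (- u) = - dotv v u.
Proof. by rewrite dotvC dotvNl dotvC. Qed.

Lemma dotvBr p (u w v : 'cV[R]_p) : dotv v (u - w) = dotv v u - dotv v w.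
Proof. by rewrite dotvDr dotvNr. Qed.

Lemma dotv0l p (v : 'cV[R]_p) : dotv 0 v = 0.
Proof. by rewrite -(scale0r 0) dotvZl mul0r. Qed.

Lemma dotv0r p (v : 'cV[R]_p) : dotv v 0 = 0.
Proof. by rewrite dotvC dotv0l. Qed.

Lemma dotv_ge0 p (v : 'cV[R]_p) : 0 <= dotv v v.
Proof. by apply: sumr_ge0 => i _; rewrite -expr2 sqr_ge0. Qed.

Lemma dotv_eq0 p (v : 'cV[R]_p) : dotv v v = 0 -> v = 0.
Proof.
move=> /eqP; rewrite psumr_eq0; last by move=> i _; rewrite -expr2 sqr_ge0.
move=> /allP H; apply/matrixP => i j; rewrite (ord1 j) mxE.
have := H i (mem_index_enum _); rewrite -expr2 sqrf_eq0 => /eqP //.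
Qed.

Lemma dotv_mul p q (A : 'M[R]_(p, q)) u v : dotv u (A *m v) = dotv (A^T *m u) v.
Proof.
rewrite /dotv.
under eq_bigr do rewrite mxE big_distrr /=.
rewrite exchange_big /=; apply: eq_bigr => j _; rewrite mxE big_distrl /=.
by apply: eq_bigr => i _; rewrite mxE; ring.
Qed.

Lemma dotv_col p1 p2 (a c : 'cV[R]_p1) (b d : 'cV[R]_p2) :
  dotv (col_mx a b) (col_mx c d) = dotv a c + dotv b d.
Proof. by rewrite /dotv big_split_ord /=; congr (_ + _); apply: eq_bigr => i _;
  rewrite ?col_mxEu ?col_mxEd. Qed.

Lemma normE_ge0 p (v : 'cV[R]_p) : 0 <= normE v.
Proof. exact: sqrtr_ge0. Qed.

Lemma normE_sq p (v : 'cV[R]_p) : normE v ^+ 2 = dotv v v.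
Proof. by rewrite sqr_sqrtr // dotv_ge0. Qed.

Lemma CS_sq p (u v : 'cV[R]_p) : dotv u v ^+ 2 <= dotv u u * dotv v v.
Proof.
have [v0|vv0] := eqVneq (dotv v v) 0.
  by rewrite (dotv_eq0 v0) dotv0r dotv0l expr0n mulr0.
have vpos : 0 < dotv v v by rewrite lt_def vv0 dotv_ge0.
set t := dotv u v / dotv v v.
have tY : t * dotv v v = dotv u v by rewrite /t divfK.
have := dotv_ge0 (u - t *: v).
rewrite !(dotvBl, dotvBr, dotvZl, dotvZr) (dotvC v u) => H.
have H2 := mulr_ge0 (ltW vpos) H.
set X := dotv u v in tY H2 *; set Y := dotv v v in tY vpos H2 *.
nra.
Qed.

Lemma CS p (u v : 'cV[R]_p) : `|dotv u v| <= normE u * normE v.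
Proof.
rewrite -sqrtr_sqr /normE -sqrtrM ?dotv_ge0 //.
by rewrite ler_sqrt ?mulr_ge0 ?dotv_ge0 // CS_sq.
Qed.

Lemma CS' p (u v : 'cV[R]_p) : dotv u v <= normE u * normE v.
Proof. exact: le_trans (ler_norm _) (CS u v). Qed.

Lemma normE_le_sq p (u : 'cV[R]_p) c : 0 <= c -> dotv u u <= c ^+ 2 -> normE u <= c.
Proof. by move=> c0 H; rewrite /normE -(ger0_norm c0) -sqrtr_sqr ler_sqrt // sqr_ge0. Qed.

Lemma normED p (u v : 'cV[R]_p) : normE (u + v) <= normE u + normE v.
Proof.
apply: normE_le_sq; first by rewrite addr_ge0 ?normE_ge0.
rewrite !(dotvDl, dotvDr) (dotvC v u) sqrrD !normE_sq.
have := CS' u v; lra.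
Qed.

Lemma normEZ p a (v : 'cV[R]_p) : normE (a *: v) = `|a| * normE v.
Proof.
by rewrite /normE dotvZl dotvZr mulrA -expr2 sqrtrM ?sqr_ge0 // sqrtr_sqr.
Qed.

Lemma normEN p (v : 'cV[R]_p) : normE (- v) = normE v.
Proof. by rewrite -scaleN1r normEZ normrN1 mul1r. Qed.

Lemma normEB p (u v : 'cV[R]_p) : normE (u - v) <= normE u + normE v.
Proof. by rewrite -(normEN v) normED. Qed.

Lemma normE0 p : normE (0 : 'cV[R]_p) = 0.
Proof. by rewrite /normE dotv0l sqrtr0. Qed.

Lemma normE_col_sq p1 p2 (a : 'cV[R]_p1) (b : 'cV[R]_p2) :
  normE (col_mx a b) ^+ 2 = normE a ^+ 2 + normE b ^+ 2.
Proof. by rewrite !normE_sq dotv_col. Qed.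

Lemma normE_eq0 p (v : 'cV[R]_p) : normE v = 0 -> v = 0.
Proof. by move=> h; apply: dotv_eq0; rewrite -normE_sq h expr0n. Qed.

End VecAlg.


Section Calc.
Variable R : realType.

Lemma is_derive_entry p q (psi : R -> 'M[R]_(p, q)) (t : R) (psi' : 'M[R]_(p, q)) i j :
  is_derive t 1 psi psi' -> is_derive t 1 (fun s => psi s i j) (psi' i j).
Proof.
move=> [dv dval].
have dij := (derivable_mxP psi t 1).1 dv i j.
split => //.
by rewrite -dval derive_mx // mxE.
Qed.

Lemma is_derive_dotv p (psi phi : R -> 'cV[R]_p) (t : R) psi' phi' :
  is_derive t 1 psi psi' -> is_derive t 1 phi phi' ->
  is_derive t 1 (fun s => dotv (psi s) (phi s)) (dotv psi' (phi t) + dotv (psi t) phi').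
Proof.
move=> dp df.
have E : (fun s => dotv (psi s) (phi s)) =
   \sum_(i < p) ((fun s => psi s i 0) * (fun s => phi s i 0)).
  by rewrite fct_sumE; apply/funext => s.
rewrite E; apply: is_derive_eq.
  apply: is_derive_sum => i; apply: is_deriveM; exact: is_derive_entry.
rewrite /dotv -big_split /=; apply: eq_bigr => i _ /=.
by rewrite addrC; congr (_ + _) => //; rewrite mulrC.
Qed.

Lemma is_derive_line p (W : normedModType R) (k : 'cV[R]_p -> W) z e (t : R) :
  derivable k (z + t *: e) e ->
  is_derive t 1 (fun s => k (z + s *: e)) ('D_e k (z + t *: e)).
Proof.
have E : (fun h : R => h^-1 *: (((fun s => k (z + s *: e)) \o shift t) (h *: 1)
             - k (z + t *: e))) =
         (fun h : R => h^-1 *: ((k \o shift (z + t *: e)) (h *: e) - k (z + t *: e))).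
  apply/funext => h /=; congr (_ *: (k _ - _)).
  by rewrite [h *: 1]mulr1 scalerDl addrCA addrC.
move=> dk; split.
  by rewrite /derivable E.
by rewrite /derive E.
Qed.

Lemma nonincr_derive (phi phi' : R -> R) (a b : R) :
  a <= b -> (forall s : R, is_derive s 1 phi (phi' s)) ->
  (forall s, a < s < b -> phi' s <= 0) -> phi b <= phi a.
Proof.
move=> ab dphi neg.
have dv : forall x, derivable phi x 1 by move=> x; case: (dphi x).
apply: (@ler0_derive1_le_cc _ phi a b) => //.
- move=> x xab; rewrite derive1E; have [_ ->] := dphi x.
  by apply: neg; rewrite in_itv /= in xab.
- by apply: derivable_within_continuous => x _.
- by rewrite in_itv /= lexx ab.
- by rewrite in_itv /= lexx ab.
Qed.

Lemma deriv_le_of_bound (phi : R -> R) (l B C d : R) :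
  is_derive (0 : R) 1 phi l -> phi 0 = 0 -> 0 < d ->
  (forall t, 0 < t < d -> phi t <= t * B + t ^+ 2 * C) -> l <= B.
Proof.
move=> [dv <-] f0 d0 H.
apply/ler_addgt0Pr => eps e0.
rewrite ['D_1 phi 0]cvg_at_rightE; last exact: dv.
apply: limr_le.
  rewrite -(cvg_at_rightE (fun h : R => h^-1 *: ((phi \o shift 0) _ - phi 0))) //.
  apply: cvg_trans dv; apply: cvg_app.
  move=> A [e egt0 Ae]; exists e => // x xe xgt0; apply: Ae => //.
  exact/lt0r_neq0.
set r := Num.min d (eps / (`|C| + 1)).
have r0 : 0 < r by rewrite lt_min d0 divr_gt0 // ltr_wpDl.
near=> h.
have : 0 < h < r.
  near: h; exists r => //= y; rewrite /ball /= sub0r normrN => yr y0.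
  by rewrite y0 /= (le_lt_trans (ler_norm _) yr).
move=> /andP [h0 hr].
move: hr; rewrite lt_min => /andP [hd hr].
have he : h * (`|C| + 1) < eps.
  by rewrite -ltr_pdivlMr ?ltr_wpDl.
rewrite /= f0 subr0 [h *: 1]mulr1 ?addr0 /GRing.scale /=.
rewrite ler_pdivrMl //.
have Hh : phi h <= h * B + h ^+ 2 * C by apply: H; rewrite h0 hd.
apply: (le_trans Hh).
have: h ^+ 2 * C <= h * eps.
  apply: le_trans (_ : h ^+ 2 * `|C| <= _).
    by rewrite ler_pM2l ?exprn_gt0 // ler_norm.
  rewrite expr2 -mulrA ler_pM2l //; nra.
nra.
Unshelve. all: by end_near. Qed.

End Calc.


Section Sop.
Variables (R : realType) (n m : nat).
Local Notation V := 'cV[R]_(n + m).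

Definition Sv (v : V) : V := col_mx (usubmx v) (- dsubmx v).

Lemma dotv_S (u v : V) : dotv (Sv u) v = dotv u (Sv v).
Proof.
rewrite /Sv -[v in LHS]vsubmxK -[u in RHS]vsubmxK !dotv_col dotvNl dotvNr.
by [].
Qed.

Lemma SvK (v : V) : Sv (Sv v) = v.
Proof. by rewrite /Sv col_mxKu col_mxKd opprK vsubmxK. Qed.

Lemma normE_S (v : V) : normE (Sv v) = normE v.
Proof. by rewrite /normE dotv_S SvK. Qed.

Lemma SvD (u v : V) : Sv (u + v) = Sv u + Sv v.
Proof. by rewrite /Sv add_col_mx; congr col_mx; rewrite ?linearD //= opprD. Qed.

Lemma SvZ a (v : V) : Sv (a *: v) = a *: Sv v.
Proof. by rewrite /Sv scale_col_mx; congr col_mx; rewrite ?linearZ //= scalerN. Qed.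

Lemma SvN (v : V) : Sv (- v) = - Sv v.
Proof. by rewrite -scaleN1r SvZ scaleN1r. Qed.

Lemma SvB (u v : V) : Sv (u - v) = Sv u - Sv v.
Proof. by rewrite SvD SvN. Qed.

Lemma JF_S (Hf : V -> 'M[R]_(n + m)) z (e : V) : JF Hf z *m e = Sv (Hf z *m e).
Proof.
rewrite /JF /Sv mul_col_mx mulNmx -[Hf z in RHS]vsubmxK mul_col_mx.
by rewrite col_mxKu col_mxKd.
Qed.

End Sop.


Section Main1.
Variables (R : realType) (n m : nat).
Local Notation V := 'cV[R]_(n + m).
Variables (f : V -> R) (g : V -> V) (H : V -> 'M[R]_(n + m)).
Hypothesis hg : has_gradient f g.
Hypothesis hH : has_jacobian g H.

Lemma D_f z e (t : R) :
  is_derive t 1 (fun s => f (z + s *: e)) (dotv (g (z + t *: e)) e).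
Proof.
have [df dfe] := hg (z + t *: e).
rewrite -dfe -deriveE //; apply: is_derive_line; exact: diff_derivable.
Qed.

Lemma D_g z e (t : R) :
  is_derive t 1 (fun s => g (z + s *: e)) (H (z + t *: e) *m e).
Proof.
have [df dfe] := hH (z + t *: e).
rewrite -dfe -deriveE //; apply: is_derive_line; exact: diff_derivable.
Qed.

Lemma D_gdot z e a (t : R) :
  is_derive t 1 (fun s => dotv (g (z + s *: e)) a) (dotv (H (z + t *: e) *m e) a).
Proof.
apply: is_derive_eq.
  exact: (is_derive_dotv (D_g z e t) (is_derive_cst a t 1)).
by rewrite dotv0r addr0.
Qed.

Lemma merit_dot z : merit g z = 2^-1 * dotv (g z) (g z).
Proof. by rewrite /merit normE_sq /Fop -/(Sv _) dotv_S SvK. Qed.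

Lemma D_merit z e (t : R) :
  is_derive t 1 (fun s => merit g (z + s *: e))
    (dotv (Fop g (z + t *: e)) (JF H (z + t *: e) *m e)).
Proof.
have E : (fun s => merit g (z + s *: e)) =
   2^-1 *: (fun s => dotv (g (z + s *: e)) (g (z + s *: e))).
  by apply/funext => s; rewrite merit_dot.
rewrite E; apply: is_derive_eq.
  exact: (is_deriveZ _ (is_derive_dotv (D_g z e t) (D_g z e t))).
rewrite JF_S /Fop -/(Sv _) dotv_S SvK (dotvC (H _ *m e)).
by rewrite /GRing.scale /=; field.
Qed.

End Main1.


Section SM.
Variables (R : realType) (n m : nat).
Local Notation V := 'cV[R]_(n + m).
Variables (f : V -> R) (g : V -> V) (H : V -> 'M[R]_(n + m)) (mu : R).
Hypothesis hg : has_gradient f g.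
Hypothesis hH : has_jacobian g H.
Hypothesis hmu : 0 < mu.
Hypothesis hsc : strongly_convex_x mu f.
Hypothesis hscc : strongly_concave_y mu f.

Lemma D_f0 z e : is_derive (0 : R) 1 (fun t => f (z + t *: e) - f z) (dotv (g z) e).
Proof.
change (is_derive (0 : R) 1 ((fun t => f (z + t *: e)) - cst (f z)) (dotv (g z) e)).
have h1 := D_f hg z e 0. have h2 := is_derive_cst (f z) (0:R) (1:R).
have h3 := is_deriveB h1 h2.
apply: is_derive_eq h3 _.
by rewrite scale0r addr0 subr0.
Qed.

Lemma sc_first (y : 'cV[R]_m) (x1 x2 : 'cV[R]_n) :
  dotv (g (col_mx x2 y)) (col_mx (x1 - x2) 0)
  <= f (col_mx x1 y) - f (col_mx x2 y) - mu / 2 * normE (x1 - x2) ^+ 2.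
Proof.
set z := col_mx x2 y; set e := col_mx (x1 - x2) (0 : 'cV[R]_m).
apply: (@deriv_le_of_bound _ (fun t => f (z + t *: e) - f z) _ _
           (mu / 2 * normE (x1 - x2) ^+ 2) 1 (D_f0 z e)).
- by rewrite scale0r addr0 subrr.
- exact: ltr01.
move=> t /andP [t0 t1].
have -> : z + t *: e = col_mx (t *: x1 + (1 - t) *: x2) y.
  rewrite /z /e scale_col_mx add_col_mx scaler0 addr0; congr col_mx.
  by rewrite scalerBr scalerBl scale1r addrCA addrC.
have := hsc y x1 x2 (t := t); rewrite (ltW t0) (ltW t1) => /(_ isT) h.
set N := normE (x1 - x2) ^+ 2 in h *.
set A := f (col_mx x1 y) in h *; set B := f z in h *.
rewrite /z -/B in h *.
nra.
Qed.

Lemma scc_first (x : 'cV[R]_n) (y1 y2 : 'cV[R]_m) :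
  f (col_mx x y1) - f (col_mx x y2) + mu / 2 * normE (y1 - y2) ^+ 2
  <= dotv (g (col_mx x y2)) (col_mx 0 (y1 - y2)).
Proof.
set z := col_mx x y2; set e := col_mx (0 : 'cV[R]_n) (y1 - y2).
rewrite -lerN2.
have D : is_derive (0 : R) 1 (fun t => - (f (z + t *: e) - f z)) (- dotv (g z) e).
  exact: is_deriveN (D_f0 z e).
apply: (@deriv_le_of_bound _ (fun t => - (f (z + t *: e) - f z)) _ _
           (mu / 2 * normE (y1 - y2) ^+ 2) 1 D).
- by rewrite scale0r addr0 subrr oppr0.
- exact: ltr01.
move=> t /andP [t0 t1].
have -> : z + t *: e = col_mx x (t *: y1 + (1 - t) *: y2).
  rewrite /z /e scale_col_mx add_col_mx scaler0 addr0; congr col_mx.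
  by rewrite scalerBr scalerBl scale1r addrCA addrC.
have := hscc x y1 y2 (t := t); rewrite (ltW t0) (ltW t1) => /(_ isT) h.
set N := normE (y1 - y2) ^+ 2 in h *.
set A := f (col_mx x y1) in h *; set B := f z in h *.
rewrite /z -/B in h *.
nra.
Qed.

Lemma strong_mono (a b : V) :
  mu * normE (a - b) ^+ 2 <= dotv (g a - g b) (Sv (a - b)).
Proof.
rewrite -[a]vsubmxK -[b]vsubmxK.
set xa := usubmx a; set ya := dsubmx a; set xb := usubmx b; set yb := dsubmx b.
have h1 := sc_first ya xb xa.
have h2 := sc_first yb xa xb.
have h3 := scc_first xa yb ya.
have h4 := scc_first xb ya yb.
have E1 : col_mx xa ya - col_mx xb yb = col_mx (xa - xb) (ya - yb).
  by rewrite opp_col_mx add_col_mx.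
have E2 : Sv (col_mx (xa - xb) (ya - yb)) =
          col_mx (xa - xb) 0 + col_mx 0 (yb - ya).
  by rewrite /Sv col_mxKu col_mxKd add_col_mx addr0 add0r opprB.
rewrite E1 E2 normE_col_sq !(dotvBl, dotvDr).
have E3 : col_mx (xb - xa) (0 : 'cV[R]_m) = - col_mx (xa - xb) 0.
  by rewrite opp_col_mx oppr0 opprB.
have E4 : col_mx (0 : 'cV[R]_n) (ya - yb) = - col_mx 0 (yb - ya).
  by rewrite opp_col_mx oppr0 opprB.
rewrite E3 dotvNr in h1; rewrite E4 dotvNr in h4.
have N1 : normE (xb - xa) = normE (xa - xb) by rewrite -normEN opprB.
have N2 : normE (yb - ya) = normE (ya - yb) by rewrite -normEN opprB.
rewrite N1 in h1; rewrite N2 in h3.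
lra.
Qed.

Lemma strong_mono_J z (e : V) : mu * normE e ^+ 2 <= dotv e (JF H z *m e).
Proof.
rewrite -lerN2.
pose phi := fun t : R => - (dotv (Fop g (z + t *: e)) e - dotv (Fop g z) e).
have h1 : is_derive (0:R) 1 (fun t => dotv (Fop g (z + t *: e)) e) (dotv (JF H z *m e) e).
  have E : (fun t => dotv (Fop g (z + t *: e)) e) = (fun s => dotv (g (z + s *: e)) (Sv e)).
    by apply/funext => s; rewrite /Fop -/(Sv _) dotv_S.
  rewrite E; apply: is_derive_eq (D_gdot hH z e (Sv e) 0) _.
  by rewrite scale0r addr0 JF_S dotv_S.
have h2 := is_derive_cst (dotv (Fop g z) e) (0:R) (1:R).
have h3 := is_deriveN (is_deriveB h1 h2).
have D : is_derive (0 : R) 1 phi (- dotv e (JF H z *m e)).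
  by apply: is_derive_eq h3 _; rewrite subr0 dotvC.
apply: (@deriv_le_of_bound _ phi _ _ 0 1 D).
- by rewrite /phi scale0r addr0 subrr oppr0.
- exact: ltr01.
move=> t /andP [t0 t1].
have h := strong_mono (z + t *: e) z.
rewrite addrAC subrr add0r normEZ SvZ dotvZr in h.
rewrite /phi /Fop -!/(Sv _) !dotv_S -dotvBl.
rewrite ger0_norm ?(ltW t0) // in h.
set X := dotv _ (Sv e) in h *.
set N := normE e in h *.
have : mu * t * N ^+ 2 <= X.
  rewrite -(ler_pM2l t0); nra.
nra.
Qed.

End SM.


Section Bounds.
Variable R : realType.

Lemma entry_le p q (M : 'M[R]_(p, q)) i j : `|M i j| <= `|M|.
Proof.
rewrite [leRHS]/Num.Def.normr /= mx_normrE.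
exact: (le_bigmax _ _ (i, j)).
Qed.

Definition Kab p q (a : 'cV[R]_p) (b : 'cV[R]_q) : R :=
  \sum_(i < p) \sum_(j < q) (`|a i 0| * `|b j 0|).

Lemma Kab_ge0 p q (a : 'cV[R]_p) (b : 'cV[R]_q) : 0 <= Kab a b.
Proof. by apply: sumr_ge0 => i _; apply: sumr_ge0 => j _; rewrite mulr_ge0. Qed.

Lemma dot_mx_bound p q (M : 'M[R]_(q, p)) (a : 'cV[R]_q) (b : 'cV[R]_p) :
  `|dotv (M *m b) a| <= `|M| * Kab a b.
Proof.
rewrite /dotv /Kab mulr_sumr.
apply: le_trans (ler_norm_sum _ _ _) _; apply: ler_sum => i _.
rewrite normrM mxE.
apply: le_trans (ler_wpM2r (normr_ge0 _) (ler_norm_sum _ _ _)) _.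
rewrite mulr_suml mulr_sumr; apply: ler_sum => j _.
rewrite normrM -mulrA [`|b j 0| * _]mulrC.
by apply: ler_wpM2r; [rewrite mulr_ge0 | exact: entry_le].
Qed.

Lemma eq_of_small (x y C : R) : 0 <= C ->
  (forall e, 0 < e -> `|x - y| <= e * C) -> x = y.
Proof.
move=> C0 H; apply/eqP; rewrite -subr_eq0 -normr_eq0; apply/eqP.
set d := `|x - y| in H *.
have d0 : 0 <= d by rewrite /d normr_ge0.
have [->|dpos] := eqVneq d 0; first by [].
have dp : 0 < d by rewrite lt_def dpos.
set k := d / (2 * (C + 1)).
have kp : 0 < k by rewrite divr_gt0 // mulr_gt0 // ltr_wpDl.
have kE : k * (2 * (C + 1)) = d by rewrite /k divfK // mulf_neq0 // gt_eqF // ltr_wpDl.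
have := H k kp.
nra.
Qed.

End Bounds.

Section Schwarz.
Variables (R : realType) (n m : nat).
Local Notation V := 'cV[R]_(n + m).
Variables (f : V -> R) (g : V -> V) (H : V -> 'M[R]_(n + m)).
Hypothesis hg : has_gradient f g.
Hypothesis hH : has_jacobian g H.
Hypothesis cH : continuous H.

Lemma cont_within_of_derive (phi phi' : R -> R) (a b : R) :
  (forall s : R, is_derive s 1 phi (phi' s)) -> {within `[a, b], continuous phi}%classic.
Proof.
by move=> dphi; apply: derivable_within_continuous => x _; case: (dphi x).
Qed.

Lemma delta_mvt z a b (s : R) : 0 < s ->
  exists th sg : R, [/\ 0 < th < s, 0 < sg < s &
  (f (z + s *: b + s *: a) - f (z + s *: a)) - (f (z + s *: b) - f z) =
    s * (s * dotv (H (z + th *: a + sg *: b) *m b) a)].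
Proof.
move=> s0.
pose rho := fun tau : R => f (z + s *: b + tau *: a) - f (z + tau *: a).
pose rho' := fun tau : R => dotv (g (z + s *: b + tau *: a)) a - dotv (g (z + tau *: a)) a.
have drho : forall tau : R, is_derive tau 1 rho (rho' tau).
  by move=> tau; exact: (is_deriveB (D_f hg (z + s *: b) a tau) (D_f hg z a tau)).
have [th th_in Eth] := MVT s0 (fun x _ => drho x) (cont_within_of_derive drho).
move: th_in; rewrite in_itv /= => /andP [th0 ths].
pose kap := fun sg : R => dotv (g (z + th *: a + sg *: b)) a.
pose kap' := fun sg : R => dotv (H (z + th *: a + sg *: b) *m b) a.
have dkap : forall sg : R, is_derive sg 1 kap (kap' sg).
  by move=> sg; exact: (D_gdot hH (z + th *: a) b a sg).
have [sg sg_in Esg] := MVT s0 (fun x _ => dkap x) (cont_within_of_derive dkap).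
move: sg_in; rewrite in_itv /= => /andP [sg0 sgs].
exists th, sg; split; rewrite ?th0 ?ths ?sg0 ?sgs //.
move: Eth; rewrite /rho /rho' !scale0r !addr0 subr0 => Eth.
rewrite Eth.
move: Esg; rewrite /kap /kap' scale0r addr0 subr0 => Esg.
rewrite [z + s *: b + th *: a]addrAC Esg; ring.
Qed.

Lemma schwarz z a b : dotv (H z *m b) a = dotv (H z *m a) b.
Proof.
apply: (@eq_of_small _ _ _ (Kab a b + Kab b a)); first by rewrite addr_ge0 ?Kab_ge0.
move=> eps e0.
have [r r0 Hr] : exists2 r : R, 0 < r & forall x, `|z - x| < r -> `|H z - H x| < eps.
  have := @cH z; move/cvgrPdist_lt/(_ eps e0); case/nbhs_ballP => r r0 Hr.
  by exists r => // x zx; apply: Hr; rewrite -ball_normE /ball_ /=.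
set s := r / (`|a| + `|b| + 1).
have ab1 : 0 < `|a| + `|b| + 1 by rewrite ltr_wpDl // addr_ge0.
have s0 : 0 < s by rewrite divr_gt0.
have sE : s * (`|a| + `|b| + 1) = r by rewrite /s divfK // gt_eqF.
have near_z : forall th sg : R, 0 < th < s -> 0 < sg < s ->
    forall (u v : V), `|u| + `|v| = `|a| + `|b| ->
    `|H z - H (z + th *: u + sg *: v)| < eps.
  move=> th sg /andP [th0 ths] /andP [sg0 sgs] u v nuv; apply: Hr.
  rewrite -addrA opprD addrA subrr sub0r normrN.
  apply: le_lt_trans (ler_normD _ _) _.
  rewrite !normrZ !ger0_norm ?ltW //.
  have := normr_ge0 a; have := normr_ge0 b; have := normr_ge0 u; have := normr_ge0 v; nra.
have [th [sg [ths sgs E1]]] := delta_mvt z a b s0.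
have [th' [sg' [ths' sgs' E2]]] := delta_mvt z b a s0.
have E : dotv (H (z + th *: a + sg *: b) *m b) a = dotv (H (z + th' *: b + sg' *: a) *m a) b.
  apply: (mulfI (lt0r_neq0 s0)); apply: (mulfI (lt0r_neq0 s0)).
  rewrite -E1 -E2 [z + s *: a + s *: b]addrAC; ring.
have B1 := dot_mx_bound (H z - H (z + th *: a + sg *: b)) a b.
have B2 := dot_mx_bound (H z - H (z + th' *: b + sg' *: a)) b a.
rewrite mulmxBl dotvBl in B1; rewrite mulmxBl dotvBl in B2.
have n1 := near_z _ _ ths sgs a b erefl.
have n2 := near_z _ _ ths' sgs' b a (addrC _ _).
rewrite E in B1.
have K1 := Kab_ge0 a b; have K2 := Kab_ge0 b a.
have l1 : `|H z - H (z + th *: a + sg *: b)| * Kab a b <= eps * Kab a b.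
  by rewrite ler_wpM2r // ltW.
have l2 : `|H z - H (z + th' *: b + sg' *: a)| * Kab b a <= eps * Kab b a.
  by rewrite ler_wpM2r // ltW.
set X1 := dotv (H z *m b) a in B1 *; set X2 := dotv (H z *m a) b in B2 *.
set Y := dotv _ b in B1 B2.
rewrite mulrDr.
apply: le_trans (_ : `|X1 - Y| + `|X2 - Y| <= _); last first.
  by apply: lerD; [apply: le_trans B1 l1 | apply: le_trans B2 l2].
have -> : X1 - X2 = (X1 - Y) - (X2 - Y) by ring.
exact: ler_normB.
Qed.

End Schwarz.


Section Cube.
Variable R : realType.

Lemma cube_real (N N' t s E : R) : 0 <= N -> 0 <= N' -> 0 <= E -> 0 <= t -> t <= 1 ->
  N' ^+ 2 = N ^+ 2 + 2 * t * s + t ^+ 2 * E ^+ 2 ->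
  `|s| <= N * E -> `|N' - N| <= t * E ->
  N' ^+ 3 - N ^+ 3 - 3 * t * N * s <= t ^+ 2 * (E ^+ 2 * (5 * N + E)).
Proof.
move=> N0 N'0 E0 t0 t1 sq hs hd.
have key : N' ^+ 3 - N ^+ 3 - 3 * t * N * s =
   (N ^+ 2 * (N' - N) - t * N * s) + 2 * t * s * (N' - N) + t ^+ 2 * E ^+ 2 * N'.
  have -> : N' ^+ 3 = N' * N' ^+ 2 by rewrite exprS.
  rewrite sq; ring.
have h1 : N ^+ 2 * (N' - N) - t * N * s <= 2 * N * t ^+ 2 * E ^+ 2.
  have [->|Npos] := eqVneq N 0.
    by rewrite !(expr0n, mul0r, mulr0, subr0, sub0r, oppr0, mul0r) /=; lra.
  have Np : 0 < N by rewrite lt_def Npos N0.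
  have P : (N' + N) * (N ^+ 2 * (N' - N) - t * N * s) =
           t * N * s * (N - N') + N ^+ 2 * t ^+ 2 * E ^+ 2.
    have -> : (N' + N) * (N ^+ 2 * (N' - N) - t * N * s) =
              N ^+ 2 * (N' ^+ 2 - N ^+ 2) - t * N * s * (N' + N) by ring.
    rewrite sq; ring.
  have b1 : t * N * s * (N - N') <= t * N * (N * E) * (t * E).
    have : `|t * N * s * (N - N')| <= t * N * (N * E) * (t * E).
      rewrite !normrM (ger0_norm t0) (ger0_norm N0) distrC.
      have q : `|s| * `|N' - N| <= (N * E) * (t * E) by apply: ler_pM.
      have tN : 0 <= t * N by rewrite mulr_ge0.
      have := ler_wpM2l tN q; rewrite !mulrA; exact.
    exact: le_trans (ler_norm _).
  have P2 : (N' + N) * (N ^+ 2 * (N' - N) - t * N * s) <=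
            (N' + N) * (2 * N * t ^+ 2 * E ^+ 2).
    rewrite P.
    have : N ^+ 2 * t ^+ 2 * E ^+ 2 <= N' * (2 * N * t ^+ 2 * E ^+ 2) + N ^+ 2 * t ^+ 2 * E ^+ 2.
      by rewrite lerDr mulr_ge0 // !mulr_ge0 // ?sqr_ge0 // mulr_ge0.
    nra.
  rewrite ler_pM2l in P2 => //.
  by rewrite ltr_wpDl.
have h2 : 2 * t * s * (N' - N) <= 2 * t ^+ 2 * N * E ^+ 2.
  have : `|s * (N' - N)| <= N * E * (t * E).
    by rewrite normrM; apply: ler_pM.
  move=> /(le_trans (ler_norm _)) h.
  have := ler_wpM2l (mulr_ge0 (ler0n _ 2) t0) h.
  nra.
have h3 : t ^+ 2 * E ^+ 2 * N' <= t ^+ 2 * E ^+ 2 * (N + E).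
  apply: ler_wpM2l; first by rewrite mulr_ge0 // sqr_ge0.
  have : N' - N <= t * E by exact: le_trans (ler_norm _) hd.
  nra.
rewrite key; nra.
Qed.

Lemma cube_bound p (u e : 'cV[R]_p) (t : R) : 0 <= t -> t <= 1 ->
  normE (u + t *: e) ^+ 3 - normE u ^+ 3 - 3 * t * normE u * dotv u e
  <= t ^+ 2 * (normE e ^+ 2 * (5 * normE u + normE e)).
Proof.
move=> t0 t1; apply: cube_real => //; rewrite ?normE_ge0 //.
- rewrite !normE_sq !(dotvDl, dotvDr, dotvZl, dotvZr) (dotvC e u); ring.
- by rewrite (le_trans (CS u e)) // ger0_norm // mulr_ge0 ?normE_ge0.
- rewrite ler_norml; apply/andP; split.
    have := normEB (u + t *: e) (t *: e); rewrite addrK normEZ ger0_norm //; lra.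
  have := normED u (t *: e); rewrite normEZ ger0_norm //; lra.
Qed.

Lemma poly_lin (A C : R) : (forall t, 0 < t < 1 -> 0 <= t * A + t ^+ 2 * C) -> 0 <= A.
Proof.
move=> H; rewrite leNgt; apply/negP => A0.
set t := Num.min 2^-1 (- A / (2 * (`|C| + 1))).
have C1 : 0 < `|C| + 1 by rewrite ltr_wpDl.
have t0 : 0 < t by rewrite lt_min invr_gt0 ltr0n /= divr_gt0 // ?oppr_gt0 // mulr_gt0.
have t1 : t < 1 by rewrite gt_min invf_lt1 ?ltr1n.
have tC : t * (2 * (`|C| + 1)) <= - A.
  by rewrite -ler_pdivlMr ?mulr_gt0 // ge_min lexx orbT.
have := H t; rewrite t0 t1 => /(_ isT).
have := ler_norm C; have := normr_ge0 C.
nra.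
Qed.

End Cube.


Section FOC.
Variables (R : realType) (n m : nat).
Local Notation V := 'cV[R]_(n + m).
Variables (f : V -> R) (g : V -> V) (H : V -> 'M[R]_(n + m)).
Hypothesis hg : has_gradient f g.
Hypothesis hH : has_jacobian g H.
Hypothesis cH : continuous H.
Variables (zk d : V) (gam : R).
Hypothesis hgam : 0 <= gam.
Hypothesis hd : crn_dir f g H zk gam d.

Local Notation u := (usubmx d).
Local Notation v := (dsubmx d).
Local Notation M := (crn_model f g H zk gam).

Lemma usub_lin (a b : V) (t : R) : usubmx a + t *: usubmx b = usubmx (a + t *: b).
Proof. by rewrite linearD linearZ. Qed.
Lemma dsub_lin (a b : V) (t : R) : dsubmx a + t *: dsubmx b = dsubmx (a + t *: b).
Proof. by rewrite linearD linearZ. Qed.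

Lemma model_expand (E : V) (t : R) :
  M (zk + d + t *: E) - M (zk + d) =
  t * dotv (g zk + H zk *m d) E + t ^+ 2 * (2^-1 * dotv E (H zk *m E))
  + gam / 3 * (normE (u + t *: usubmx E) ^+ 3 - normE u ^+ 3)
  - gam / 3 * (normE (v + t *: dsubmx E) ^+ 3 - normE v ^+ 3).
Proof.
have e1 : zk + d + t *: E - zk = d + t *: E.
  by apply/eqP; rewrite subr_eq [d + _ + zk]addrC addrA.
have e2 : zk + d - zk = d by rewrite addrC addKr.
rewrite /crn_model e1 e2 usub_lin dsub_lin.
rewrite mulmxDr -scalemxAr !(dotvDl, dotvDr, dotvZl, dotvZr).
have s1 : dotv d (H zk *m E) = dotv (H zk *m d) E.
  by rewrite dotvC (schwarz hg hH cH).
have s2 : dotv E (H zk *m d) = dotv (H zk *m d) E by rewrite dotvC.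
rewrite s1 s2. set A := dotv (g zk) d. set B := dotv (g zk) E. set C := dotv (H zk *m d) E. set D := dotv E (H zk *m E). set X := normE _ ^+ 3. set Y := normE (dsubmx _) ^+ 3. set Z := dotv d _. lra.
Qed.

Lemma foc_x_ge (e : 'cV[R]_n) :
  0 <= dotv (g zk + H zk *m d) (col_mx e 0) + gam * normE u * dotv u e.
Proof.
set E := col_mx e (0 : 'cV[R]_m).
apply: (@poly_lin _ _ (2^-1 * dotv E (H zk *m E) +
                        gam / 3 * (normE e ^+ 2 * (5 * normE u + normE e)))).
move=> t /andP [t0 t1].
have [_ sad] := hd (usubmx (zk + d) + t *: e) (dsubmx (zk + d)).
rewrite /= vsubmxK in sad.
have eE : col_mx (usubmx (zk + d) + t *: e) (dsubmx (zk + d)) = zk + d + t *: E.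
  by set w := zk + d; rewrite -{3}(vsubmxK w) /E scale_col_mx add_col_mx scaler0 addr0.
rewrite eE -subr_ge0 model_expand /E col_mxKu col_mxKd scaler0 addr0 subrr mulr0 subr0 in sad.
have cb := cube_bound u e (ltW t0) (ltW t1).
set A := dotv (g zk + H zk *m d) (col_mx e 0) in sad *.
set Q := dotv (col_mx e 0) _ in sad *.
set X := normE (u + t *: e) ^+ 3 - normE u ^+ 3 in sad cb.
set Y := normE e ^+ 2 * _ in cb *.
set P := dotv u e in cb *.
set Nu := normE u in cb *.
have : gam / 3 * X <= gam / 3 * (3 * t * Nu * P + t ^+ 2 * Y).
  by apply: ler_wpM2l; [rewrite divr_ge0 | lra].
nra.
Qed.

Lemma foc_x (e : 'cV[R]_n) :
  dotv (g zk + H zk *m d) (col_mx e 0) + gam * normE u * dotv u e = 0.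
Proof.
apply/eqP; rewrite eq_le foc_x_ge andbT.
have := foc_x_ge (- e).
have -> : col_mx (- e) (0 : 'cV[R]_m) = - col_mx e 0 by rewrite opp_col_mx oppr0.
by rewrite dotvNr dotvNr; lra.
Qed.

Lemma foc_y_ge (e : 'cV[R]_m) :
  0 <= - dotv (g zk + H zk *m d) (col_mx 0 e) + gam * normE v * dotv v e.
Proof.
set E := col_mx (0 : 'cV[R]_n) e.
apply: (@poly_lin _ _ (- (2^-1 * dotv E (H zk *m E)) +
                        gam / 3 * (normE e ^+ 2 * (5 * normE v + normE e)))).
move=> t /andP [t0 t1].
have [sad _] := hd (usubmx (zk + d)) (dsubmx (zk + d) + t *: e).
rewrite /= vsubmxK in sad.
have eE : col_mx (usubmx (zk + d)) (dsubmx (zk + d) + t *: e) = zk + d + t *: E.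
  by set w := zk + d; rewrite -{3}(vsubmxK w) /E scale_col_mx add_col_mx scaler0 addr0.
rewrite eE -subr_ge0 -opprB model_expand /E col_mxKu col_mxKd scaler0 addr0 subrr mulr0 addr0 in sad.
have cb := cube_bound v e (ltW t0) (ltW t1).
set A := dotv (g zk + H zk *m d) (col_mx 0 e) in sad *.
set Q := dotv (col_mx 0 e) _ in sad *.
set X := normE (v + t *: e) ^+ 3 - normE v ^+ 3 in sad cb.
set Y := normE e ^+ 2 * _ in cb *.
set P := dotv v e in cb *.
set Nv := normE v in cb *.
have : gam / 3 * X <= gam / 3 * (3 * t * Nv * P + t ^+ 2 * Y).
  by apply: ler_wpM2l; [rewrite divr_ge0 | lra].
nra.
Qed.

Lemma foc_y (e : 'cV[R]_m) :
  - dotv (g zk + H zk *m d) (col_mx 0 e) + gam * normE v * dotv v e = 0.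
Proof.
apply/eqP; rewrite eq_le foc_y_ge andbT.
have := foc_y_ge (- e).
have -> : col_mx (0 : 'cV[R]_n) (- e) = - col_mx 0 e by rewrite opp_col_mx oppr0.
by rewrite dotvNr dotvNr; lra.
Qed.

Lemma foc :
  Fop g zk + JF H zk *m d + gam *: col_mx (normE u *: u) (normE v *: v) = 0.
Proof.
set r := g zk + H zk *m d.
have -> : Fop g zk + JF H zk *m d = Sv r by rewrite JF_S /Fop -/(Sv _) SvD.
rewrite /Sv scale_col_mx add_col_mx !scalerA.
set q1 := usubmx r + _; set q2 := - dsubmx r + _.
have rE : r = col_mx (usubmx r) (dsubmx r) by rewrite vsubmxK.
have Q1 : forall e, dotv q1 e = 0.
  move=> e; rewrite /q1 dotvDl dotvZl -(foc_x e) -/r.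
  by rewrite [in RHS]rE dotv_col dotv0r addr0.
have Q2 : forall e, dotv q2 e = 0.
  move=> e; rewrite /q2 dotvDl dotvZl dotvNl -(foc_y e) -/r.
  by rewrite [in RHS]rE dotv_col dotv0r add0r.
by rewrite (dotv_eq0 (Q1 q1)) (dotv_eq0 (Q2 q2)) col_mx0.
Qed.

End FOC.


Section Lin.
Variable R : realType.

Lemma is_derive_mulc (c t : R) : is_derive t 1 (fun s : R => s * c) c.
Proof.
have h := is_deriveZ c (is_derive_id t (1 : R)).
have E : (fun s : R => s * c) = c *: id by apply/funext => s; rewrite /= mulrC.
by rewrite E; apply: is_derive_eq h _; rewrite /GRing.scale /= mulr1.
Qed.

Lemma is_derive_sqc (c t : R) : is_derive t 1 (fun s : R => s ^+ 2 * c) (2 * t * c).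
Proof.
have h := is_deriveM (is_derive_mulc c t) (is_derive_id t (1 : R)).
have E : (fun s : R => s ^+ 2 * c) = (fun s : R => s * c) * id.
  by apply/funext => s; rewrite /= expr2 mulrAC.
by rewrite E; apply: is_derive_eq h _; rewrite /GRing.scale /=; lra.
Qed.

End Lin.

Section Taylor.
Variables (R : realType) (n m : nat).
Local Notation V := 'cV[R]_(n + m).
Variables (f : V -> R) (g : V -> V) (H : V -> 'M[R]_(n + m)) (L L2 : R).
Hypothesis hg : has_gradient f g.
Hypothesis hH : has_jacobian g H.
Hypothesis hL : forall w, specnorm_le (JF H w) L.
Hypothesis hL2 : forall w w', specnorm_le (JF H w - JF H w') (L2 * normE (w - w')).
Hypothesis L0 : 0 <= L.
Hypothesis L20 : 0 <= L2.

Lemma D_F z e a (t : R) :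
  is_derive t 1 (fun s => dotv (Fop g (z + s *: e)) a) (dotv (JF H (z + t *: e) *m e) a).
Proof.
have E : (fun s => dotv (Fop g (z + s *: e)) a) = (fun s => dotv (g (z + s *: e)) (Sv a)).
  by apply/funext => s; rewrite /Fop -/(Sv _) dotv_S.
rewrite E; apply: is_derive_eq (D_gdot hH z e (Sv a) t) _.
by rewrite JF_S dotv_S.
Qed.

Lemma MVI (a b : V) : normE (Fop g b - Fop g a) <= L * normE (b - a).
Proof.
set r := Fop g b - Fop g a; set e := b - a.
pose c := L * normE e * normE r.
pose phi := fun s : R => dotv (Fop g (a + s *: e)) r - s * c.
have dphi : forall s : R, is_derive s 1 phi (dotv (JF H (a + s *: e) *m e) r - c).
  by move=> s; exact: (is_deriveB (D_F a e r s) (is_derive_mulc c s)).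
have := @nonincr_derive _ phi _ 0 1 ler01 dphi.
have neg : forall s : R, 0 < s < 1 -> dotv (JF H (a + s *: e) *m e) r - c <= 0.
  move=> s _; rewrite subr_le0 /c.
  apply: le_trans (CS' _ _) _.
  by apply: ler_wpM2r; [exact: normE_ge0 | exact: hL].
move=> /(_ neg).
rewrite /phi scale1r scale0r addr0 mul0r subr0 mul1r.
have -> : a + e = b by rewrite /e addrC subrK.
rewrite lerBlDr -lerBlDl -dotvBl -/r -normE_sq /c => h.
have [r0|rpos] := eqVneq (normE r) 0.
  by rewrite r0 mulr_ge0 // normE_ge0.
have rp : 0 < normE r by rewrite lt_def rpos normE_ge0.
by rewrite -(ler_pM2r rp) -expr2.
Qed.

Lemma taylor z e (s0 : R) : 0 <= s0 ->
  merit g (z + s0 *: e) <= merit g z + s0 * dotv (Fop g z) (JF H z *m e)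
     + s0 ^+ 2 * (2^-1 * ((L ^+ 2 + L2 * normE (Fop g z)) * normE e ^+ 2)).
Proof.
move=> s00.
set h0 := dotv (Fop g z) (JF H z *m e).
set c := 2^-1 * ((L ^+ 2 + L2 * normE (Fop g z)) * normE e ^+ 2).
pose psi := fun s : R => merit g (z + s *: e) - s * h0 - s ^+ 2 * c.
have dpsi : forall s : R, is_derive s 1 psi
   (dotv (Fop g (z + s *: e)) (JF H (z + s *: e) *m e) - h0 - 2 * s * c).
  move=> s; exact: (is_deriveB (is_deriveB (D_merit hH z e s) (is_derive_mulc h0 s))
                     (is_derive_sqc c s)).
have := @nonincr_derive _ psi _ 0 s0 s00 dpsi.
have neg : forall s : R, 0 < s < s0 ->
    dotv (Fop g (z + s *: e)) (JF H (z + s *: e) *m e) - h0 - 2 * s * c <= 0.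
  move=> s /andP [s0p _].
  set Fs := Fop g (z + s *: e); set Js := JF H (z + s *: e).
  have split : dotv Fs (Js *m e) - h0 =
      dotv (Fs - Fop g z) (Js *m e) + dotv (Fop g z) ((Js - JF H z) *m e).
    by rewrite /h0 dotvBl mulmxBl dotvBr; lra.
  have b1 : dotv (Fs - Fop g z) (Js *m e) <= L * (s * normE e) * (L * normE e).
    apply: le_trans (CS' _ _) _.
    apply: ler_pM; rewrite ?normE_ge0 //.
      move: (MVI z (z + s *: e)); rewrite addrAC subrr add0r normEZ (ger0_norm (ltW s0p)).
      by move=> h; exact: h.
    exact: hL.
  have b2 : dotv (Fop g z) ((Js - JF H z) *m e) <=
            normE (Fop g z) * (L2 * (s * normE e) * normE e).
    apply: le_trans (CS' _ _) _.
    apply: ler_wpM2l; first exact: normE_ge0.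
    have := hL2 (z + s *: e) z e.
    rewrite addrAC subrr add0r normEZ (ger0_norm (ltW s0p)).
    by move=> h; exact: h.
  rewrite split /c.
  have := normE_ge0 e; have := normE_ge0 (Fop g z).
  nra.
move=> /(_ neg).
rewrite /psi scale0r addr0 mul0r expr0n /= mul0r !subr0.
lra.
Qed.

End Taylor.


Section Topo.
Variable R : realType.

Lemma mx_norm_tr_le p q (x : 'M[R]_(p, q)) : `|x^T| <= `|x|.
Proof.
rewrite [leLHS]/Num.Def.normr /= mx_normrE.
apply: bigmax_le => [|ij _]; first exact: normr_ge0.
by rewrite mxE; exact: entry_le.
Qed.

Lemma tr_cont p q : continuous (fun r : 'M[R]_(p, q) => r^T).
Proof.
move=> x; apply/(cvgrPdist_lt (FF := nbhs_filter x)) => eps e0.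
apply/nbhs_ballP; exists eps => // y; rewrite -ball_normE /ball_ /= => h.
apply: le_lt_trans h; rewrite -linearB /=; exact: mx_norm_tr_le.
Qed.

Lemma entry_normE p (v : 'cV[R]_p) i : `|v i 0| <= normE v.
Proof.
rewrite /normE -sqrtr_sqr ler_sqrt ?dotv_ge0 // /dotv (bigD1 i) //= -expr2 lerDl.
by apply: sumr_ge0 => j _; rewrite -expr2 sqr_ge0.
Qed.

End Topo.

Section EZ.
Variables (R : realType) (n m : nat).
Local Notation V := 'cV[R]_(n + m).
Variables (f : V -> R) (g : V -> V) (H : V -> 'M[R]_(n + m)) (mu L L2 D : R) (z0 : V).
Hypothesis hg : has_gradient f g.
Hypothesis hH : has_jacobian g H.
Hypothesis hmu : 0 < mu.
Hypothesis hsc : strongly_convex_x mu f.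
Hypothesis hscc : strongly_concave_y mu f.
Hypothesis hL : forall w, specnorm_le (JF H w) L.
Hypothesis hL2 : forall w w', specnorm_le (JF H w - JF H w') (L2 * normE (w - w')).
Hypothesis L0 : 0 <= L.
Hypothesis L20 : 0 <= L2.
Hypothesis hD : is_level_max g z0 D.

Lemma merit_cont : continuous (merit g).
Proof.
have cg : continuous g by move=> z; exact: differentiable_continuous (hH z).1.
have E : merit g = (fun z => 2^-1 * \sum_(i < n + m) (g z i 0 * g z i 0)).
  by apply/funext => z; rewrite merit_dot.
rewrite E => z.
change ({for z, continuous ((cst 2^-1) \* (fun z => \sum_(i < n + m) (g z i 0 * g z i 0)))}).
apply: continuousM; first exact: cst_continuous.
apply: (continuous_big (op := +%R) (x0 := 0)); first exact: add_continuous.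
move=> i _ w.
change ({for w, continuous ((fun z => g z i 0) \* (fun z => g z i 0))}).
apply: continuousM;
  exact: (continuous_comp (@cg w) (@coord_continuous _ _ _ i 0 _)).
Qed.

Lemma merit_ge0 z : 0 <= merit g z.
Proof. by rewrite /merit mulr_ge0 // sqr_ge0. Qed.

Lemma zero_exists : exists zs, Fop g zs = 0.
Proof.
have [[zD [hzD _]] hlev] := hD.
pose psi := fun r : 'rV[R]_(n + m) => merit g r^T.
pose A := [set r : 'rV[R]_(n + m) | psi r <= merit g z0]%classic.
have cpsi : continuous psi.
  by move=> x; exact: (continuous_comp (@tr_cont R 1 (n + m) x) (@merit_cont x^T)).
have A0 : (A !=set0)%classic by exists z0^T; rewrite /A /psi /= trmxK.
have cA : compact A.
  apply: bounded_closed_compact.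
    exists (D + `|z0|); split; first exact: num_real.
    move=> M hM r Ar.
    have hr : normE (r^T - z0) <= D by apply: hlev.
    rewrite /= [leLHS]/Num.Def.normr /= mx_normrE.
    apply: bigmax_le => [|ij _]; first by apply: le_trans (ltW hM); rewrite addr_ge0 //;
       apply: le_trans (normE_ge0 (r^T - z0)) hr.
    have e1 : `|r ij.1 ij.2| = `|(r^T - z0) ij.2 0 + z0 ij.2 0|.
      by rewrite !mxE subrK (ord1 ij.1).
    rewrite e1; apply: le_trans (ler_normD _ _) _; apply: ltW; apply: le_lt_trans hM.
    apply: lerD; first by apply: le_trans (entry_normE _ _) hr.
    exact: entry_le.
  have hcl := (continuous_closedP psi).1 cpsi _ (closed_le (y := merit g z0)); exact: hcl.
have [c cA' cmin] := compact_EVT_min A0 cA (continuous_subspaceT cpsi).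
set zs := c^T.
have gmin : forall w, merit g zs <= merit g w.
  move=> w; have [wl|wg] := leP (merit g w) (merit g z0).
    have : psi c <= psi w^T by apply: cmin; rewrite inE /A /psi /= trmxK.
    by rewrite /psi trmxK.
  rewrite inE /A /= in cA'.
  exact: le_trans cA' (ltW wg).
exists zs; apply: normE_eq0.
set Fz := Fop g zs; set N := normE Fz.
have N0 : 0 <= N := normE_ge0 _.
rewrite (_ : N = 0) //; apply/eqP; rewrite eq_le N0 andbT; rewrite leNgt; apply/negP => Np.
set K := 2^-1 * (L ^+ 2 + L2 * N).
have K0 : 0 <= K by rewrite mulr_ge0 // addr_ge0 ?sqr_ge0 // mulr_ge0.
set s := mu / (K + 1).
have K1 : 0 < K + 1 by rewrite ltr_wpDl.
have s0 : 0 < s by rewrite divr_gt0.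
have sK : s * (K + 1) = mu by rewrite /s divfK // gt_eqF.
have T := taylor hH hL hL2 L0 zs (- Fz) (ltW s0).
rewrite normEN -/Fz -/N mulmxN dotvNr in T.
have SMJ := strong_mono_J hg hH hsc hscc zs Fz.
have := gmin (zs + s *: - Fz).
have N2 : 0 < N ^+ 2 by rewrite exprn_gt0.
set X := dotv Fz _ in T SMJ.
have h1 := ler_wpM2l (ltW s0) SMJ.
rewrite -sK in h1.
have e2 : s ^+ 2 * (2^-1 * ((L ^+ 2 + L2 * N) * N ^+ 2)) = s ^+ 2 * K * N ^+ 2.
  by rewrite /K; lra.
rewrite e2 in T.
have p : 0 < s ^+ 2 * N ^+ 2 by rewrite mulr_gt0 // exprn_gt0.
move=> h2.
have := le_trans h2 T.
move=> h3; rewrite -/N in h1; nra.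
Qed.

Lemma level_F z : merit g z <= merit g z0 -> normE (Fop g z) <= L * D.
Proof.
move=> hz.
have [[zD [hzD _]] hlev] := hD.
have [zs Fzs] := zero_exists.
have hzs : normE (zs - z0) <= D.
  apply: hlev; apply: le_trans (merit_ge0 z0).
  by rewrite /merit Fzs normE0 expr0n mulr0.
have h0 : normE (Fop g z0) <= L * D.
  have := MVI hH hL L0 zs z0; rewrite Fzs subr0 => h.
  apply: le_trans h _; apply: ler_wpM2l => //.
  by rewrite -normEN opprB.
apply: le_trans h0.
move: hz; rewrite /merit => hz.
have := normE_ge0 (Fop g z); have := normE_ge0 (Fop g z0).
nra.
Qed.

End EZ.

Unset Implicit Arguments. Set Strict Implicit.

Section OneStep.
Variables (R : realType) (n m : nat).
Local Notation V := 'cV[R]_(n + m).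
Variables (f : V -> R) (g : V -> V) (H : V -> 'M[R]_(n + m)).

Lemma deriv_bound (mu gam : R) (zk d : V) :
  has_gradient f g -> has_jacobian g H -> 0 < mu ->
  strongly_convex_x mu f -> strongly_concave_y mu f ->
  0 <= gam -> gam * (normE (usubmx d) + normE (dsubmx d)) <= mu ->
  Fop g zk + JF H zk *m d + gam *: col_mx (normE (usubmx d) *: usubmx d)
      (normE (dsubmx d) *: dsubmx d) = 0 ->
  dotv (Fop g zk) (JF H zk *m d) <= - (mu ^+ 2 * normE d ^+ 2).
Proof.
move=> hg hH hmu hsc hscc g0 gstep hfoc.
set u := usubmx d; set v := dsubmx d.
set p := JF H zk *m d.
set lb := (normE u + normE v) / 2; set dl := (normE u - normE v) / 2.
have wE : col_mx (normE u *: u) (normE v *: v) = lb *: d + dl *: Sv d.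
  rewrite /Sv -/u -/v -{1}[d]vsubmxK -/u -/v !scale_col_mx add_col_mx scalerN.
  by congr col_mx; [rewrite -scalerDl | rewrite -scalerBl]; congr (_ *: _); rewrite /lb /dl; lra.
have FE : Fop g zk = - p - gam *: (lb *: d + dl *: Sv d).
  rewrite -wE /p.
  set W := col_mx _ _.
  have h : Fop g zk = (Fop g zk + JF H zk *m d + gam *: W) - (JF H zk *m d + gam *: W).
    by rewrite -[Fop g zk + _ + gam *: W]addrA addrK.
  by rewrite h hfoc sub0r opprD.
rewrite FE !(dotvBl, dotvDl, dotvZl, dotvNl).
set P := normE p; set Nd := normE d.
set Dp := dotv d p; set Sp := dotv (Sv d) p.
have P0 : 0 <= P := normE_ge0 _.
have Nd0 : 0 <= Nd := normE_ge0 _.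
have A1 : mu * Nd ^+ 2 <= Dp by exact: strong_mono_J hg hH hsc hscc zk d.
have A2 : `|Sp| <= Nd * P by rewrite /Sp; apply: le_trans (CS _ _) _; rewrite normE_S.
have A3 : mu * Nd <= P.
  have := le_trans A1 (CS' d p); rewrite -/Nd -/P => h.
  have [->|ndp] := eqVneq Nd 0; first by rewrite mulr0.
  have Ndp : 0 < Nd by rewrite lt_def ndp Nd0.
  by rewrite -(ler_pM2l Ndp); nra.
have pp : dotv p p = P ^+ 2 by rewrite normE_sq.
rewrite pp.
have u0 := normE_ge0 u; have v0 := normE_ge0 v.
set r := gam * lb; set tau := gam * dl.
have r0 : 0 <= r by rewrite mulr_ge0 // /lb divr_ge0 // addr_ge0.
have tr : `|tau| <= r.
  rewrite /tau /r normrM (ger0_norm g0); apply: ler_wpM2l => //.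
  by rewrite /dl /lb ler_norml; apply/andP; split; lra.
have r2 : 2 * r <= mu by rewrite /r /lb; lra.
have LHS : - P ^+ 2 - gam * (lb * Dp + dl * Sp) = - P ^+ 2 - r * Dp - tau * Sp.
  by rewrite /r /tau; lra.
rewrite LHS.
have s1 : - (r * Dp) <= - (r * (mu * Nd ^+ 2)) by rewrite lerN2 ler_wpM2l.
have s2 : - (tau * Sp) <= `|tau| * (Nd * P).
  apply: le_trans (_ : `|tau * Sp| <= _).
    by rewrite -normrN ler_norm.
  by rewrite normrM; apply: ler_wpM2l.
have s3 : - (r * (mu * Nd ^+ 2)) + `|tau| * (Nd * P) <= `|tau| * Nd * (P - mu * Nd).
  have : `|tau| * (mu * Nd ^+ 2) <= r * (mu * Nd ^+ 2).
    have q : 0 <= mu * Nd ^+ 2 by apply: mulr_ge0; [exact: ltW | exact: sqr_ge0].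
    have sg : 0 <= r - `|tau| by rewrite subr_ge0.
    have := mulr_ge0 sg q; nra.
  lra.
have s4 : `|tau| * Nd * (P - mu * Nd) <= (mu / 2) * Nd * (P - mu * Nd).
  apply: ler_wpM2r; first by rewrite subr_ge0.
  apply: ler_wpM2r => //; lra.
have s5 : - P ^+ 2 + (mu / 2) * Nd * (P - mu * Nd) <= - (mu ^+ 2 * Nd ^+ 2).
  have : 0 <= (P - mu * Nd) * (P + mu * Nd / 2).
    by rewrite mulr_ge0 // ?subr_ge0 // addr_ge0 // divr_ge0 // mulr_ge0 // ltW.
  lra.
lra.
Qed.

End OneStep.


Theorem proposition3p4 (R : realType) (n m : nat)
    (f : 'cV[R]_(n + m) -> R) (g : 'cV[R]_(n + m) -> 'cV[R]_(n + m))
    (H : 'cV[R]_(n + m) -> 'M[R]_(n + m))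
    (mu L L2 D gbar rho : R) (z d : nat -> 'cV[R]_(n + m)) :
  has_gradient f g -> has_jacobian g H -> continuous H ->
  0 < mu -> strongly_convex_x mu f -> strongly_concave_y mu f ->
  (forall w, specnorm_le (JF H w) L) ->
  (forall w w', specnorm_le (JF H w - JF H w') (L2 * normE (w - w'))) ->
  is_level_max g (z 0%N) D ->
  0 < gbar -> 0 < rho < 1 ->
  let Lm := L ^+ 2 + L2 * L * D in
  let alpha := mu ^+ 2 / (2 * Lm) in
  alpha < 1 ->
  (forall k, crn_step f g H mu gbar rho alpha (z k) (z k.+1) (d k)) ->
  forall k, merit g (z k.+1) - merit g (z k)
            <= - (mu ^+ 4 / (8 * Lm)) * normE (d k) ^+ 2.
Proof.
move=> hg hH cH hmu hsc hscc hL hL2 hD hgbar /andP [rho0 rho1] Lm alpha halpha hstep.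
have [[e0 e0nz]|nex] := pselect (exists e : 'cV[R]_(n + m), e != 0); last first.
  have all0 : forall e : 'cV[R]_(n + m), e = 0.
    by move=> e; apply/eqP; apply: contrapT => h; apply: nex; exists e; apply/negP.
  move=> k; rewrite /merit (all0 (d k)) (all0 (Fop g (z k.+1))) (all0 (Fop g (z k))) normE0.
  by rewrite expr0n /= mulr0n !mulr0 subr0.
have N0 : 0 < normE e0.
  rewrite lt_def normE_ge0 andbT; apply/eqP => h; move/eqP: e0nz; apply.
  exact: normE_eq0.
have muL : mu <= L.
  have h1 := strong_mono_J hg hH hsc hscc 0 e0.
  have h2 := le_trans h1 (CS' _ _).
  have h3 := hL 0 e0.
  have h4 := ler_wpM2l (normE_ge0 e0) h3.
  have h5 := le_trans h2 h4.
  have : mu * normE e0 ^+ 2 <= L * normE e0 ^+ 2 by rewrite expr2; lra.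
  by rewrite ler_pM2r // exprn_gt0.
have L0 : 0 <= L by apply: le_trans (ltW hmu) muL.
have L20 : 0 <= L2.
  have h := hL2 e0 0 e0.
  rewrite subr0 in h.
  have : 0 <= L2 * (normE e0 ^+ 2) by rewrite expr2 mulrA; apply: le_trans h; exact: normE_ge0.
  by rewrite pmulr_lge0 // exprn_gt0.
have D0 : 0 <= D.
  by have [[zD [_ <-]] _] := hD; exact: normE_ge0.
have Lmpos : 0 < Lm.
  rewrite /Lm; apply: lt_le_trans (_ : 0 < L ^+ 2) _.
    by rewrite exprn_gt0 // (lt_le_trans hmu muL).
  by rewrite lerDl mulr_ge0 // mulr_ge0.
have al0 : 0 <= alpha by rewrite /alpha divr_ge0 // ?sqr_ge0 // mulr_ge0 // ltW.
have aL : alpha * Lm = mu ^+ 2 / 2.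
  rewrite /alpha invfM -mulrA mulfVK //; exact: lt0r_neq0.
have step : forall k, merit g (z k) <= merit g (z 0%N) ->
    merit g (z k.+1) - merit g (z k) <= - (mu ^+ 4 / (8 * Lm)) * normE (d k) ^+ 2.
  move=> k hk.
  have [j [hdir [hgam [_ hz]]]] := hstep k.
  set gam := gbar * rho ^+ j in hdir hgam.
  have g0 : 0 <= gam by apply: mulr_ge0; [exact: ltW | apply: exprn_ge0; exact: ltW].
  have hfoc := foc hg hH cH g0 hdir.
  have hb := @deriv_bound R n m f g H mu gam (z k) (d k) hg hH hmu hsc hscc g0 hgam hfoc.
  have T := taylor hH hL hL2 L0 (z k) (d k) al0.
  have hF := level_F hg hH hmu hsc hscc hL hL2 L0 L20 hD hk.
  have hsel : merit g (z k.+1) <= merit g (z k + alpha *: d k).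
    rewrite hz; case: ifPn => // /negbTE; rewrite ltNge => /negbFE //.
  set Nd := normE (d k) in hb T *.
  set NF := normE (Fop g (z k)) in T hF.
  set h0 := dotv _ _ in hb T.
  have c1 : L ^+ 2 + L2 * NF <= Lm.
    by rewrite /Lm lerD2l -mulrA ler_wpM2l.
  have c2 : alpha ^+ 2 * (2^-1 * ((L ^+ 2 + L2 * NF) * Nd ^+ 2))
            <= alpha ^+ 2 * (2^-1 * (Lm * Nd ^+ 2)).
    apply: ler_wpM2l; first exact: sqr_ge0.
    apply: ler_wpM2l; first by rewrite invr_ge0.
    by apply: ler_wpM2r => //; exact: sqr_ge0.
  have c3 : alpha * h0 <= alpha * (- (mu ^+ 2 * Nd ^+ 2)) by apply: ler_wpM2l.
  have e4 : mu ^+ 4 / (8 * Lm) = alpha * mu ^+ 2 / 4.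
    rewrite /alpha; field; by rewrite gt_eqF.
  rewrite e4.
  have e5 : alpha ^+ 2 * (2^-1 * (Lm * Nd ^+ 2)) = alpha * (mu ^+ 2 / 4) * Nd ^+ 2.
    have -> : alpha ^+ 2 * (2^-1 * (Lm * Nd ^+ 2)) = alpha * (alpha * Lm) * (2^-1 * Nd ^+ 2).
      by lra.
    by rewrite aL; lra.
  rewrite e5 in c2.
  have := normE_ge0 (d k); have := sqr_ge0 Nd; have := sqr_ge0 mu.
  nra.
have mono : forall k, merit g (z k) <= merit g (z 0%N).
  elim => [|k IH] //.
  have := step k IH.
  have : 0 <= mu ^+ 4 / (8 * Lm) * normE (d k) ^+ 2.
    apply: mulr_ge0; last exact: sqr_ge0.
    apply: divr_ge0; first by apply: exprn_ge0; exact: ltW.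
    by apply: mulr_ge0; [exact: ler0n | exact: ltW].
  lra.
by move=> k; apply: step.
Qed.
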